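(* Let $n\in\mathbb N$ and let $(M,d)$ be a metric space with $d(x,y)\in\{0,1,\dots,n\}$ for all $x,y\in M$. Let $\mu\in ba(\widetilde M)$ be positive, let $\gamma\in(0,1)$, and let $A\subseteq\widetilde M$ be $\gamma$-cyclically monotonic. Then there exists a cyclically monotonic subset $B\subseteq A$ with $\mu(B)\ge\mu(A)-2n(1-\gamma)\mu(\widetilde M)$.
   Context: $\widetilde M=\{(x,y)\in M\times M:x\ne y\}$. $ba(\widetilde M)$ denotes the bounded finitely additive signed measures on the power set of $\widetilde M$. For $\gamma\in(0,1]$, $A\subseteq\widetilde M$ is $\gamma$-cyclically monotonic if for every finite sequence $(x_1,y_1),\dots,(x_k,y_k)\in A$, with $y_{k+1}=y_1$, $\sum_{i=1}^k\min\{d(x_i,y_{i+1})-\gamma d(x_i,y_i),\,d(y_i,y_{i+1})\}\ge0$. $A$ is cyclically monotonic if for every such finite sequence $\sum_{i=1}^k d(x_i,y_{i+1})\ge\sum_{i=1}^k d(x_i,y_i)$ (equivalently, $1$-cyclically monotonic). *)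

(* Defs.v *)
From mathcomp Require Import all_boot all_order all_algebra.
From mathcomp Require Import boolp classical_sets reals.
Set Implicit Arguments. Unset Strict Implicit. Unset Printing Implicit Defensive.
Import Order.TTheory GRing.Theory Num.Theory.
Local Open Scope ring_scope.
Local Open Scope classical_set_scope.

Definition is_metric (R : realType) (M : Type) (d : M -> M -> R) : Prop :=
  [/\ forall x y, 0 <= d x y,
      forall x y, d x y = 0 <-> x = y,
      forall x y, d x y = d y x
    & forall x y z, d x z <= d x y + d y z].

Definition Mtilde (M : Type) : set (M * M) := [set p | p.1 <> p.2].
Arguments Mtilde : clear implicits.

(* mu is a positive element of ba(M~): a finitely additive, nonnegative,
   real-valued (hence bounded) set function on the power set of M~.
   Values of mu on sets not contained in M~ are irrelevant. *)
Definition positive_ba (R : realType) (M : Type) (mu : set (M * M) -> R) : Prop :=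
  [/\ mu set0 = 0,
      forall A, A `<=` Mtilde M -> 0 <= mu A
    & forall A B, A `<=` Mtilde M -> B `<=` Mtilde M -> A `&` B = set0 ->
        mu (A `|` B) = mu A + mu B].

Definition gamma_cyc_mono (R : realType) (M : Type) (d : M -> M -> R) (gamma : R)
    (A : set (M * M)) : Prop :=
  forall (k : nat) (p : nat -> M * M), (forall i, (i < k)%N -> A (p i)) ->
    0 <= \sum_(i < k)
           Num.min (d (p i).1 (p (i.+1 %% k)%N).2 - gamma * d (p i).1 (p i).2)
                   (d (p i).2 (p (i.+1 %% k)%N).2).

Definition cyc_mono (R : realType) (M : Type) (d : M -> M -> R)
    (A : set (M * M)) : Prop :=
  forall (k : nat) (p : nat -> M * M), (forall i, (i < k)%N -> A (p i)) ->
    \sum_(i < k) d (p i).1 (p i).2 <= \sum_(i < k) d (p i).1 (p (i.+1 %% k)%N).2.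

(* Main.v *)
Require Import Defs.
From mathcomp Require Import all_boot all_order all_algebra.
From mathcomp Require Import boolp classical_sets reals.
From mathcomp Require Import lra.
Import Order.TTheory GRing.Theory Num.Theory.
Local Open Scope ring_scope.
Local Open Scope classical_set_scope.

Lemma sum_rot (R : realType) (F : nat -> R) k :
  \sum_(i < k) F (i.+1 %% k)%N = \sum_(i < k) F i.
Proof.
case: k => [|k]; first by rewrite !big_ord0.
rewrite big_ord_recr big_ord_recl /= modnn addrC; congr (_ + _).
apply: eq_bigr => i _ /=; rewrite modn_small ?ltnS //.
Qed.

Lemma int_gap (R : realType) (z w : int) : (z%:~R : R) < w%:~R -> z%:~R + 1 <= (w%:~R : R).
Proof.
rewrite ltr_int -lezD1 => h.
have : ((z + 1)%:~R : R) <= w%:~R by rewrite ler_int.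
by rewrite intrD.
Qed.

Lemma natz_R (R : realType) (k : nat) : ((k%:Z)%:~R : R) = k%:R.
Proof. by []. Qed.

Section Pot.
Variables (R : realType) (n : nat) (M : Type) (d : M -> M -> R).
Hypothesis hd : is_metric d.
Hypothesis hint : forall x y, exists k : nat, (k <= n)%N /\ d x y = k%:R.
Variables (gamma : R).
Hypothesis hg0 : 0 < gamma.
Hypothesis hg1 : gamma < 1.
Variable A : set (M * M).
Hypothesis hAg : gamma_cyc_mono d gamma A.

Lemma d_ge0 x y : 0 <= d x y. Proof. by case: hd. Qed.
Lemma d_le_n x y : d x y <= n%:R.
Proof. by have [k [hk ->]] := hint x y; rewrite ler_nat. Qed.
Lemma d_tri x y z : d x z <= d x y + d y z. Proof. by case: hd. Qed.
Lemma d_xx x : d x x = 0. Proof. by case: hd => _ h _ _; apply/h. Qed.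

Definition W z (p : nat -> M * M) m :=
  d z (p 0%N).2 + \sum_(i < m) d (p i).1 (p i.+1).2
  - gamma * \sum_(i < m.+1) d (p i).1 (p i).2.

Lemma W_lb z p m : (forall i, (i <= m)%N -> A (p i)) -> - (n%:R + n%:R) <= W z p m.
Proof.
move=> hp.
have := @hAg m.+1 p hp.
rewrite big_ord_recr /= modnn.
set S1 := \sum_(i < m) _.
have h1 : S1 <= \sum_(i < m) (d (p i).1 (p i.+1).2 - gamma * d (p i).1 (p i).2).
  apply: ler_sum => i _ /=; rewrite modn_small ?ltnS //.
  by rewrite ge_min lexx.
have h2 : Num.min (d (p m).1 (p 0%N).2 - gamma * d (p m).1 (p m).2)
   (d (p m).2 (p 0%N).2) <= n%:R.
  by rewrite ge_min d_le_n orbT.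
have h3 : gamma * d (p m).1 (p m).2 <= n%:R.
  apply: le_trans (d_le_n (p m).1 (p m).2).
  by rewrite ler_piMl ?d_ge0 // ltW.
move: h1; rewrite sumrB -mulr_sumr => h1 h0.
rewrite /W big_ord_recr /= mulrDr.
have := d_ge0 z (p 0%N).2.
lra.
Qed.

Definition Sset z := [set r : R | r = 0 \/ exists m p,
  (forall i, (i <= m)%N -> A (p i)) /\ r = W z p m].
Definition pot z := inf (Sset z).

Lemma pot_le z r : Sset z r -> pot z <= r.
Proof.
move=> hr; apply: ge_inf => //.
exists (- (n%:R + n%:R)) => s [->|[m [p [hp ->]]]]; last exact: W_lb.
by rewrite oppr_le0 addr_ge0.
Qed.

Lemma pot_lip z w : pot z - pot w <= d z w.
Proof.
suff : pot z - d z w <= pot w by lra.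
apply: lb_le_inf; first by exists 0; left.
move=> r [->|[m [p [hp ->]]]].
  have := @pot_le z 0 (or_introl erefl); have := d_ge0 z w; lra.
have := @pot_le z (W z p m) (or_intror (ex_intro _ m (ex_intro _ p (conj hp erefl)))).
rewrite /W; have := d_tri z w (p 0%N).2; lra.
Qed.

Lemma pot_A x y : A (x, y) -> gamma * d x y <= pot x - pot y.
Proof.
move=> hxy.
suff : pot y + gamma * d x y <= pot x by lra.
apply: lb_le_inf; first by exists 0; left.
move=> r [->|[m [p [hp ->]]]].
  pose p0 := fun _ : nat => (x, y).
  have hS : Sset y (W y p0 0) by right; exists 0%N, p0; split.
  have := @pot_le _ _ hS; rewrite /W big_ord0 big_ord1 /= d_xx; lra.
pose p' := fun i : nat => if i is j.+1 then p j else (x, y).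
have hp' : forall i, (i <= m.+1)%N -> A (p' i) by case.
have hS : Sset y (W y p' m.+1) by right; exists m.+1, p'; split.
have := @pot_le _ _ hS.
have -> : W y p' m.+1 = W x p m - gamma * d x y.
  rewrite /W big_ord_recl [in X in _ - gamma * X]big_ord_recl /= d_xx.
  under eq_bigr => i _ do rewrite add0n /bump leq0n add1n.
  under [X in _ - gamma * (_ + X)]eq_bigr => i _ do rewrite add0n.
  lra.
lra.
Qed.

End Pot.

Section Round.
Variables (R : realType) (n : nat) (M : Type) (d : M -> M -> R).
Hypothesis hint : forall x y, exists k : nat, (k <= n)%N /\ d x y = k%:R.
Variable f : M -> R.
Hypothesis hf : forall z w, f z - f w <= d z w.

Definition G (t : R) z : R := (Num.floor (f z + t))%:~R.

Lemma G_lip t z w : G t z - G t w <= d z w.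
Proof.
have [k [_ hk]] := hint z w; rewrite hk.
have h1 := floor_le (f z + t).
have h2 := floorD1_gt (f w + t).
have := hf z w; rewrite hk => h3.
have h4 : G t z < (Num.floor (f w + t) + k%:Z + 1)%:~R.
  move: h2; rewrite /G !intrD natz_R; lra.
have := @int_gap _ _ _ h4; rewrite /G !intrD natz_R; lra.
Qed.

Lemma G_fail t x y : G t x - G t y <> d x y ->
  f y + t - G t y < d x y - (f x - f y).
Proof.
move=> hne.
have hle := G_lip t x y.
have [k [_ hk]] := hint x y; rewrite hk in hle hne *.
have hlt : G t x - G t y < k%:R by rewrite lt_neqAle hle andbT; apply/eqP.
have h4 : ((Num.floor (f x + t) - Num.floor (f y + t))%:~R : R) < (k%:Z)%:~R.
  by rewrite intrB natz_R.
have := @int_gap _ _ _ h4; rewrite intrB natz_R.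
have := floorD1_gt (f x + t); rewrite intrD /G; lra.
Qed.

Definition Bset (A : set (M * M)) t :=
  [set p | A p /\ G t p.1 - G t p.2 = d p.1 p.2].

Lemma Bset_cyc A t : cyc_mono d (Bset A t).
Proof.
move=> k p hp.
have -> : \sum_(i < k) d (p i).1 (p i).2 = \sum_(i < k) (G t (p i).1 - G t (p i).2).
  by apply: eq_bigr => i _; have [_ ->] := hp i (ltn_ord i).
rewrite sumrB -(@sum_rot _ (fun i => G t (p i).2)) -sumrB.
apply: ler_sum => i _; exact: G_lip.
Qed.

Lemma fail_disj x y (m : nat) (j1 j2 : nat) :
  (0 < m)%N -> (j1 < j2)%N -> (j2 < m)%N ->
  d x y - (f x - f y) <= m%:R^-1 ->
  G (j1%:R * m%:R^-1) x - G (j1%:R * m%:R^-1) y <> d x y ->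
  G (j2%:R * m%:R^-1) x - G (j2%:R * m%:R^-1) y <> d x y -> False.
Proof.
move=> m0 hj12 hj2 he f1 f2.
set c := (m%:R^-1 : R) in f1 f2 he *.
have c0 : 0 <= c by rewrite invr_ge0.
have cm : m%:R * c = 1 by rewrite mulfV // pnatr_eq0 -lt0n.
have hA : j1%:R * c + c <= j2%:R * c.
  have : (j1.+1%:R : R) <= j2%:R by rewrite ler_nat.
  rewrite -natr1 => h; rewrite -[X in _ + X]mul1r -mulrDl; exact: ler_wpM2r.
have hB : j2%:R * c + c <= 1.
  have : (j2.+1%:R : R) <= m%:R by rewrite ler_nat.
  rewrite -natr1 => h; rewrite -[X in _ + X]mul1r -mulrDl.
  by apply: le_trans (ler_wpM2r c0 h) _; rewrite cm.
have hC : 0 <= j1%:R * c by rewrite mulr_ge0.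
have g1 := G_fail _ _ _ f1; have g2 := G_fail _ _ _ f2.
have l1 := floor_le (f y + j1%:R * c).
have l2 := floor_le (f y + j2%:R * c).
have hz : ((0 : int)%:~R : R) < (Num.floor (f y + j2%:R * c) - Num.floor (f y + j1%:R * c))%:~R.
  rewrite intrB /=; move: g1 g2 l1 l2; rewrite /G; lra.
have := @int_gap _ _ _ hz; rewrite intrB /=; move: g1 g2 l1 l2; rewrite /G; lra.
Qed.

End Round.
Arguments Bset {R M}.
Arguments fail_disj {R n M d} hint {f} hf {x y m j1 j2}.
Arguments Bset_cyc {R n M d} hint {f} hf.

Theorem lemma2p7 (R : realType) (n : nat) (M : Type) (d : M -> M -> R)
    (hd : is_metric d)
    (hint : forall x y, exists k : nat, (k <= n)%N /\ d x y = k%:R)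
    (mu : set (M * M) -> R) (hmu : positive_ba mu)
    (gamma : R) (hg0 : 0 < gamma) (hg1 : gamma < 1)
    (A : set (M * M)) (hA : A `<=` Mtilde M) (hAg : gamma_cyc_mono d gamma A) :
  exists B : set (M * M), B `<=` A /\ cyc_mono d B /\
    mu A - 2 * n%:R * (1 - gamma) * mu (Mtilde M) <= mu B.
Proof.
case: hmu => mu0 mu_ge0 mu_add.
have muMt0 : 0 <= mu (Mtilde M) by apply: mu_ge0.
have mu_mono : forall X Y, X `<=` Y -> Y `<=` Mtilde M -> mu X <= mu Y.
  move=> X Y hXY hY; rewrite -(setDUK hXY) mu_add ?setDIK //.
  - by rewrite lerDl; apply: mu_ge0 => p [/hY].
  - exact: subset_trans hY.
  - by move=> p [/hY].
have muA : mu A <= mu (Mtilde M) by exact: mu_mono.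
case: n hint => [|n'] hint.
  exists A; split => //; split.
    move=> k p _; rewrite !big1 // => i _.
      by have [kk [hk ->]] := hint (p i).1 (p (i.+1 %% k)%N).2; move: hk; rewrite leqn0 => /eqP ->.
    by have [kk [hk ->]] := hint (p i).1 (p i).2; move: hk; rewrite leqn0 => /eqP ->.
  by rewrite mulr0n mulr0 !mul0r subr0.
set N := n'.+1.
set del := N%:R * (1 - gamma).
have del0 : 0 < del by rewrite mulr_gt0 // ?subr_gt0 // ltr0n.
have -> : 2 * N%:R * (1 - gamma) = 2 * del by rewrite /del mulrA.
case: (lerP 1 (2 * del)) => hdel.
  exists set0; split => //; split.
    move=> [|k] p hp; first by rewrite !big_ord0.
    by case: (hp 0%N).
  rewrite mu0; have : mu (Mtilde M) <= 2 * del * mu (Mtilde M).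
    by rewrite ler_peMl.
  lra.
set f := pot R M d gamma A.
have hf : forall z w, f z - f w <= d z w := @pot_lip R N M d hd hint gamma hg1 A hAg.
have hfA : forall x y, A (x, y) -> gamma * d x y <= f x - f y := @pot_A R N M d hd hint gamma hg1 A hAg.
set x := del^-1.
have dx : del * x = 1 by rewrite mulfV // gt_eqF.
have x2 : 2 < x.
  have : del * 2 < del * x by rewrite dx; lra.
  by rewrite ltr_pM2l.
set m := Num.truncn x.
have /andP [hm1 hm2] := truncn_itv (ltW (lt_trans (ltr0n _ 2) x2)).
rewrite -/m in hm1 hm2.
have m0 : (0 < m)%N.
  rewrite lt0n; apply/negP => /eqP hm; move: hm2; rewrite hm; lra.
have mR0 : (m%:R : R) != 0 by rewrite pnatr_eq0 -lt0n.
set c := (m%:R^-1 : R).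
have c0 : 0 <= c by rewrite invr_ge0.
have cm : m%:R * c = 1 by rewrite mulfV.
have h1 : del * m%:R <= 1 by rewrite -[X in _ <= X]dx ler_wpM2l // ltW.
have h2 : 1 < del * (m%:R + 1) by rewrite -[X in X < _]dx ltr_pM2l // natr1.
have hdc : del <= c.
  have -> : del = del * m%:R * c by rewrite -mulrA cm mulr1.
  by rewrite -[X in _ <= X]mul1r ler_wpM2r.
have hc2 : c <= 2 * del.
  have h3 : 1 <= 2 * del * m%:R by move: h2; rewrite mulrDr mulr1; lra.
  have -> : 2 * del = c * (2 * del * m%:R).
    by rewrite (mulrC c) -!mulrA cm mulr1.
  by rewrite -[X in X <= _]mulr1 ler_wpM2l.
pose t j := j%:R * c.
pose Fj j := [set p | A p /\ ~ Bset d f A (t j) p].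
have FjA j : Fj j `<=` A by move=> p [].
have Fjs j : Fj j `<=` Mtilde M by move=> p [/hA].
have disj : forall j1 j2 p, (j1 < j2)%N -> (j2 < m)%N -> Fj j1 p -> Fj j2 p -> False.
  move=> j1 j2 [y1 y2] hj12 hj2 [hp1 nb1] [_ nb2].
  apply: (@fail_disj R N M d hint f hf y1 y2 m j1 j2 m0 hj12 hj2).
  - have := hfA _ _ hp1.
    have [kk [hk hdk]] := hint y1 y2.
    have hle : d y1 y2 <= N%:R by rewrite hdk ler_nat.
    have : (1 - gamma) * d y1 y2 <= (1 - gamma) * N%:R.
      by apply: ler_wpM2l => //; rewrite subr_ge0 ltW.
    rewrite mulrBl mul1r [_ * N%:R]mulrC -/del => h4 h5.
    rewrite -/c; move: hdc h4 h5; lra.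
  - by move=> h; apply: nb1; split.
  - by move=> h; apply: nb2; split.
pose U k := [set p | exists j, (j < k)%N /\ Fj j p].
have hU : forall k, (k <= m)%N -> mu (U k) = \sum_(j < k) mu (Fj j).
  elim=> [|k IH] hk.
    rewrite big_ord0 -mu0; congr (mu _); apply/seteqP; split => p //.
    by move=> [j []].
  rewrite big_ord_recr /= -IH ?(ltnW hk) //.
  have -> : U k.+1 = U k `|` Fj k.
    apply/seteqP; split => p.
      move=> [j [hj hF]]; move: hj; rewrite ltnS leq_eqVlt => /orP [/eqP ej|hj].
        by right; rewrite -ej.
      by left; exists j.
    move=> [[j [hj hF]]|hF]; first by exists j; split => //; apply: ltnW.
    by exists k; split.
  rewrite mu_add //.
  - by move=> p [j [_ /Fjs]].
  - apply/seteqP; split => p // [[j [hj hF]] hF'].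
    exact: (disj j k p hj hk hF hF').
have hsum : \sum_(j < m) mu (Fj j) <= mu (Mtilde M).
  rewrite -hU //; apply: mu_mono => //.
  by move=> p [j [_ /Fjs]].
have [j hj] : exists j : 'I_m, mu (Fj j) <= mu (Mtilde M) * c.
  case: (pselect (exists j : 'I_m, mu (Fj j) <= mu (Mtilde M) * c)) => // hne.
  exfalso.
  have hlt : forall j : 'I_m, mu (Mtilde M) * c < mu (Fj j).
    by move=> j; rewrite ltNge; apply/negP => h; apply: hne; exists j.
  have : \sum_(j < m) (mu (Mtilde M) * c) < \sum_(j < m) mu (Fj j).
    apply: ltr_sum; last by move=> i _; exact: hlt.
    by apply/hasP; exists (Ordinal m0); rewrite ?mem_index_enum.
  rewrite sumr_const card_ord -mulr_natr -mulrA [c * _]mulrC cm mulr1.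
  lra.
exists (Bset d f A (t j)); split; first by move=> p [].
split; first exact: (Bset_cyc hint hf).
have eA : A = Bset d f A (t j) `|` Fj j.
  apply/seteqP; split => p.
    move=> hp; case: (pselect (Bset d f A (t j) p)) => hb; first by left.
    by right; split.
  by move=> [[]|[]].
have hmA : mu A = mu (Bset d f A (t j)) + mu (Fj j).
  rewrite {1}eA mu_add //.
  - by move=> p [/hA].
  - by apply/seteqP; split => p // [hb [_ nb]].
have : mu (Mtilde M) * c <= mu (Mtilde M) * (2 * del) by rewrite ler_wpM2l.
rewrite [_ * mu _]mulrC.
lra.
Qed.
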